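(* Let $M$ be a smooth manifold, $Y$ a complex manifold and $\mathcal{F}$ a holomorphic foliation on $Y$. The first-order differential relation $\mathcal{R}_{\mathbb{C}Tr}\subseteq J^1(M,Y)$ consisting of 1-jets $(x,y,L)$, $L:T_xM\to T_yY$, such that $\pi\circ L:T_xM\to N_y\mathcal{F}$ is a $\mathbb{C}$-epimorphism (so that its $C^1$ solutions are exactly the maps $\mathbb{C}$-transverse to $\mathcal{F}$) is ample in the coordinate directions.
   Context: $N\mathcal{F}=TY/T\mathcal{F}$ and $\pi:TY\to N\mathcal{F}$ is the projection. An $\mathbb{R}$-linear map $\Phi:V\to W$ from a real vector space to a complex vector space is a $\mathbb{C}$-epimorphism if $z\otimes v\mapsto z\Phi(v)$, $\mathbb{C}\otimes V\to W$, is surjective. A map $f:M\to Y$ is $\mathbb{C}$-transverse to $\mathcal{F}$ if $\pi\circ df$ is a $\mathbb{C}$-epimorphism at every point. A relation $\mathcal{R}\subseteq J^1(M,Y)$ is ample in the coordinate directions if, in local coordinates $x_1,\dots,x_n$ on $M$, for every $j$ and every fixed choice of $(x,y)$ and of all partial derivatives except the $j$-th, the set of values $v$ of the $j$-th partial derivative for which the resulting jet lies in $\mathcal{R}$ is either empty or has the property that the convex hull of each of its path components is the whole space. *)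

(* Defs.v *)
From HB Require Import structures.
From mathcomp Require Import all_boot all_order all_algebra.
From mathcomp Require Import all_classical all_reals topology normedtype.
From mathcomp Require Import complex.
Set Implicit Arguments. Unset Strict Implicit. Unset Printing Implicit Defensive.
Import Order.TTheory GRing.Theory Num.Theory.
Import numFieldNormedType.Exports.
Local Open Scope classical_set_scope.
Local Open Scope ring_scope.

Section Defs.
Variable R : realType.
Local Notation C := (R[i]).

(* A real-linear map Phi : R^n -> C^q is encoded by the matrix U whose k-th row
   is Phi(e_k).  Phi is a C-epimorphism iff  C (x)_R R^n -> C^q,
   z (x) e_k |-> z * Phi(e_k)  is surjective; an element of C (x)_R R^n is
   sum_k z_k (x) e_k, i.e. a row z : 'rV[C]_n, mapped to z *m U. *)
Definition C_epi (n q : nat) (U : 'M[C]_(n, q)) : Prop :=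
  forall w : 'rV[C]_q, exists z : 'rV[C]_n, w = z *m U.

(* Local model of J^1(M,Y): x in R^n (chart of M), y in C^m (holomorphic chart
   of Y), L : T_xM = R^n -> T_yY = C^m real-linear, encoded by the matrix whose
   k-th row is L(e_k) = d f / d x_k.  The foliation F is encoded by the family
   P y : 'M[C]_(m, q) of the C-linear projections pi_y : T_yY -> N_yF = C^q
   (row-vector convention v |-> v *m P y), each surjective. *)
Definition R_CTr (n m q : nat) (P : 'rV[C]_m -> 'M[C]_(m, q))
  (x : 'rV[R]_n) (y : 'rV[C]_m) (L : 'M[C]_(n, m)) : Prop :=
  C_epi (L *m P y).

Definition set_row (n m : nat) (L : 'M[C]_(n, m)) (j : 'I_n) (v : 'rV[C]_m)
  : 'M[C]_(n, m) :=
  \matrix_(k, l) if k == j then v 0 l else L k l.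

(* Topology on C^m = R^{2m}: via real and imaginary parts. *)
Definition reV (m : nat) (v : 'rV[C]_m) : 'rV[R]_m := map_mx (@complex.Re R) v.
Definition imV (m : nat) (v : 'rV[C]_m) : 'rV[R]_m := map_mx (@complex.Im R) v.

Definition path_in (m : nat) (A : set 'rV[C]_m) (v w : 'rV[C]_m) : Prop :=
  exists gamma : R -> 'rV[C]_m,
    [/\ gamma 0 = v, gamma 1 = w,
        (forall t : R, 0 <= t <= 1 -> A (gamma t)),
        {within [set t : R | 0 <= t <= 1], continuous (fun t => reV (gamma t))}
      & {within [set t : R | 0 <= t <= 1], continuous (fun t => imV (gamma t))}].

Definition path_component (m : nat) (A : set 'rV[C]_m) (v : 'rV[C]_m)
  : set 'rV[C]_m := [set w | path_in A v w].

Definition conv_hull (m : nat) (A : set 'rV[C]_m) : set 'rV[C]_m :=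
  [set w | exists (k : nat) (t : 'I_k -> R) (p : 'I_k -> 'rV[C]_m),
     [/\ forall i, 0 <= t i, \sum_(i < k) t i = 1, forall i, A (p i)
       & w = \sum_(i < k) (t i)%:C%C *: p i]].

Definition ample_coord (n m : nat)
  (Rel : 'rV[R]_n -> 'rV[C]_m -> 'M[C]_(n, m) -> Prop) : Prop :=
  forall (x : 'rV[R]_n) (y : 'rV[C]_m) (L : 'M[C]_(n, m)) (j : 'I_n),
    let Omega := [set v : 'rV[C]_m | Rel x y (set_row L j v)] in
    Omega = set0 \/
    (forall v, Omega v -> conv_hull (path_component Omega v) = setT).

End Defs.

(* Main.v *)
Require Import Defs.
From HB Require Import structures.
From mathcomp Require Import all_boot all_order all_algebra.
From mathcomp Require Import all_classical all_reals topology normedtype.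
From mathcomp Require Import complex ring lra.
Import GRing.Theory Num.Theory.
Import numFieldNormedType.Exports.
Local Open Scope classical_set_scope.
Local Open Scope ring_scope.

Section Helpers.
Variable R : realType.
Local Notation C := (R[i]).

Lemma cepi_ker n q (M : 'M[C]_(n, q)) (c : 'cV[C]_q) :
  C_epi M -> M *m c = 0 -> c = 0.
Proof.
move=> HM Hc; apply/matrixP => i k; rewrite (ord1 k) [RHS]mxE.
have [z hz] := HM (delta_mx 0 i).
have : (delta_mx 0 i : 'rV[C]_q) *m c = 0 by rewrite hz -mulmxA Hc mulmx0.
rewrite -rowE => /matrixP/(_ 0 0); rewrite !mxE => ->; by [].
Qed.

Lemma not_cepi n q (M : 'M[C]_(n, q)) :
  ~ C_epi M -> exists c : 'cV[C]_q, c != 0 /\ M *m c = 0.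
Proof.
move=> H.
have nrf : ~~ row_full M.
  apply/negP => rf; apply: H => w.
  have : (w <= M)%MS by apply: submx_full.
  by case/submxP => z ->; exists z.
have K0 : cokermx M != 0.
  rewrite -mxrank_eq0 mxrank_coker.
  move: nrf; rewrite /row_full => nrf.
  have := rank_leq_col M; move: nrf; rewrite subn_eq0 -ltnNge.
  by move=> /negbTE h hl; rewrite ltn_neqAle h hl.
have [k hk] : exists k, col k (cokermx M) != 0.
  apply: contrapT => hn; move/eqP: K0; apply; apply/matrixP => i k.
  have : col k (cokermx M) = 0.
    by apply: contrapT => hk; apply: hn; exists k; apply/eqP.
  by move/matrixP/(_ i 0); rewrite !mxE.
exists (col k (cokermx M)); split => //.
by rewrite colE mulmxA mulmx_coker mul0mx.
Qed.

Definition fsc q (r : 'rV[C]_q) (c : 'cV[C]_q) : C := (r *m c) 0 0.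
Arguments fsc {q}.

Lemma emr n q (e : 'cV[C]_n) (r : 'rV[C]_q) (c : 'cV[C]_q) :
  e *m r *m c = fsc r c *: e.
Proof.
rewrite -mulmxA; apply/matrixP => i k; rewrite (ord1 k) !mxE big_ord1 mulrC.
by [].
Qed.

Lemma fscD q a b (r1 r2 : 'rV[C]_q) c :
  fsc (a *: r1 + b *: r2) c = a * fsc r1 c + b * fsc r2 c.
Proof. by rewrite /fsc mulmxDl -!scalemxAl !mxE. Qed.


Lemma Nc n q (B : 'M[C]_(n, q)) e r c :
  (B + e *m r) *m c = B *m c + fsc r c *: e.
Proof. by rewrite mulmxDl emr. Qed.

Lemma key n q (B : 'M[C]_(n, q)) (e : 'cV[C]_n) (r1 r2 : 'rV[C]_q) (a b : C)
  (c1 c2 : 'cV[C]_q) :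
  e != 0 -> a + b = 1 -> c1 != 0 -> c2 != 0 ->
  (B + e *m r1) *m c1 = 0 -> (B + e *m r2) *m c2 = 0 ->
  exists c : 'cV[C]_q, c != 0 /\ (B + e *m (a *: r1 + b *: r2)) *m c = 0.
Proof.
move=> e0 hab c10 c20 h1 h2.
rewrite Nc in h1; rewrite Nc in h2.
have hB1 : B *m c1 = - (fsc r1 c1 *: e) by apply/eqP; rewrite -addr_eq0 h1.
have hB2 : B *m c2 = - (fsc r2 c2 *: e) by apply/eqP; rewrite -addr_eq0 h2.
have ha : a = 1 - b by rewrite -hab addrK.
set b1 := b * (fsc r2 c1 - fsc r1 c1).
set b2 := a * (fsc r1 c2 - fsc r2 c2).
have N1 : (B + e *m (a *: r1 + b *: r2)) *m c1 = b1 *: e.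
  rewrite Nc hB1 fscD /b1 ha -scaleNr -scalerDl; congr (_ *: _); ring.
have N2 : (B + e *m (a *: r1 + b *: r2)) *m c2 = b2 *: e.
  rewrite Nc hB2 fscD /b2 ha -scaleNr -scalerDl; congr (_ *: _); ring.
have [b10|b1n0] := eqVneq b1 0.
  by exists c1; split => //; rewrite N1 b10 scale0r.
have [psi0|psin0] := eqVneq (b2 *: c1 - b1 *: c2) 0; last first.
  exists (b2 *: c1 - b1 *: c2); split => //.
  by rewrite mulmxBr -!scalemxAr N1 N2 !scalerA mulrC subrr.
exfalso.
have M21 : (B + e *m r2) *m c1 = (fsc r2 c1 - fsc r1 c1) *: e.
  by rewrite Nc hB1 scalerBl addrC.
have : b2 *: ((B + e *m r2) *m c1) = b1 *: ((B + e *m r2) *m c2).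
  by rewrite !scalemxAr; congr (_ *m _); apply/eqP; rewrite -subr_eq0 psi0.
rewrite M21 Nc h2 scaler0 scalerA => /eqP; rewrite scaler_eq0 (negbTE e0) orbF.
rewrite mulf_eq0 => /orP [/eqP b20|].
  move/eqP: psi0; rewrite b20 scale0r sub0r oppr_eq0 scaler_eq0 (negbTE b1n0).
  by rewrite (negbTE c20).
by move=> hf; move: b1n0; rewrite /b1 (eqP hf) mulr0 eqxx.
Qed.


Lemma set_row_dec n m (L : 'M[C]_(n, m)) (j : 'I_n) (v : 'rV[C]_m) :
  set_row L j v = set_row L j 0 + delta_mx j 0 *m v.
Proof.
apply/matrixP => k l; rewrite !mxE big_ord1 !mxE.
by case: eqP => _; rewrite ?mul1r ?mul0r ?addr0 ?add0r.
Qed.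

Definition good n m q (L : 'M[C]_(n, m)) (j : 'I_n) (A : 'M[C]_(m, q)) (v : 'rV[C]_m) :=
  C_epi (set_row L j v *m A).
Arguments good {n m q}.

Lemma good_dec n m q (L : 'M[C]_(n, m)) (j : 'I_n) (A : 'M[C]_(m, q)) (v : 'rV[C]_m) :
  set_row L j v *m A = set_row L j 0 *m A + delta_mx j 0 *m (v *m A).
Proof. by rewrite {1}set_row_dec mulmxDl mulmxA. Qed.

Lemma two_bad n m q (L : 'M[C]_(n, m)) (j : 'I_n) (A : 'M[C]_(m, q)) (v0 d : 'rV[C]_m) (z1 z2 : C) :
  good L j A v0 -> ~ good L j A (v0 + z1 *: d) -> ~ good L j A (v0 + z2 *: d) ->
  z1 = z2.
Proof.
move=> g0 b1 b2; apply: contrapT => /eqP hne.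
have hz : z2 - z1 != 0 by rewrite subr_eq0 eq_sym.
move: b1 b2; rewrite /good (good_dec _ _ _ L j A (v0 + z1 *: d)) (good_dec _ _ _ L j A (v0 + z2 *: d)).
move=> /not_cepi [c1 [c10 h1]] /not_cepi [c2 [c20 h2]].
have e0 : (delta_mx j 0 : 'cV[C]_n) != 0.
  apply/eqP => /matrixP/(_ j 0); rewrite !mxE !eqxx /= => /eqP.
  by rewrite oner_eq0.
set a := z2 / (z2 - z1); set b := - z1 / (z2 - z1).
have hab : a + b = 1 by rewrite /a /b; field.
have [c [c0 hc]] := key _ _ _ _ _ _ _ _ _ _ e0 hab c10 c20 h1 h2.
have hv : a *: ((v0 + z1 *: d) *m A) + b *: ((v0 + z2 *: d) *m A) = v0 *m A.
  rewrite !scalemxAl -mulmxDl; congr (_ *m _).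
  rewrite !scalerDr !scalerA addrACA -scalerDl hab scale1r -scalerDl.
  have -> : a * z1 + b * z2 = 0.
    by rewrite /a /b; field.
  by rewrite scale0r addr0.
move: g0; rewrite /good (good_dec _ _ _ L j A v0) -hv => /cepi_ker /(_ hc) c00.
by move: c0; rewrite c00 eqxx.
Qed.


Definition gg m (v0 d : 'rV[C]_m) (t s : R) : 'rV[C]_m :=
  v0 + (s +i* (s * t))%C *: d.
Arguments gg {m}.

Lemma gg0 m (v0 d : 'rV[C]_m) (t : R) : gg v0 d t 0 = v0.
Proof.
rewrite /gg mul0r.
have -> : (0 +i* 0)%C = 0 :> C by [].
by rewrite scale0r addr0.
Qed.

Lemma seg_ok n m q (L : 'M[C]_(n, m)) (j : 'I_n) (A : 'M[C]_(m, q))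
  (v0 d : 'rV[C]_m) (t1 t2 : R) :
  good L j A v0 -> t1 != t2 ->
  (forall s, 0 <= s <= 1 -> good L j A (gg v0 d t1 s)) \/
  (forall s, 0 <= s <= 1 -> good L j A (gg v0 d t2 s)).
Proof.
move=> g0 ht.
case: (pselect (forall s, 0 <= s <= 1 -> good L j A (gg v0 d t1 s))) => h;
  [by left | right] => s2 hs2.
apply: contrapT => hb2.
have [s1 [hs1 hb1]] : exists s1, 0 <= s1 <= 1 /\ ~ good L j A (gg v0 d t1 s1).
  apply: contrapT => hn; apply: h => s hs; apply: contrapT => hb.
  by apply: hn; exists s.
have := two_bad _ _ _ L j A v0 d (s1 +i* (s1 * t1))%C (s2 +i* (s2 * t2))%C g0 hb1 hb2.
case => e1 e2.
move: e2; rewrite -e1 => /eqP; rewrite -subr_eq0 -mulrBr mulf_eq0 subr_eq0.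
rewrite (negbTE ht) orbF => /eqP s10.
by apply: hb1; rewrite s10 gg0.
Qed.

Lemma reV_gg m (v0 d : 'rV[C]_m) (t s : R) :
  reV (gg v0 d t s) = reV v0 + s *: (reV d - t *: imV d).
Proof.
apply/matrixP => i k; rewrite !mxE.
case: (v0 i k) => a b; case: (d i k) => c e /=; ring.
Qed.

Lemma imV_gg m (v0 d : 'rV[C]_m) (t s : R) :
  imV (gg v0 d t s) = imV v0 + s *: (imV d + t *: reV d).
Proof.
apply/matrixP => i k; rewrite !mxE.
case: (v0 i k) => a b; case: (d i k) => c e /=; ring.
Qed.

Lemma cont_aff m (a b : 'rV[R]_m) (S : set R) :
  {within S, continuous (fun s : R => a + s *: b)}.
Proof.
apply: continuous_subspaceT => x.
have h1 : {for x, continuous (fun=> a)} by apply: cst_continuous.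
have h2 : {for x, continuous (fun s : R => s *: b)}.
  by apply: (@continuousZr_tmp _ _ _ id b x).
exact: (continuousD h1 h2).
Qed.

End Helpers.
Arguments good {R n m q}.
Arguments gg {R m}.

Lemma neqs (R : realType) : [/\ (1:R) != 2, (1:R) != - 2, (-1:R) != 2 & (-1:R) != - 2].
Proof. split; apply/eqP; lra. Qed.

Lemma half_eqs (R : realType) (t : R) :
  ((1/2)%:C + (1/2)%:C = 1 :> R[i])%C /\
  ((1/2)%:C * (1 +i* (1 * t)) + (1/2)%:C * (1 +i* (1 * - t)) = 1 :> R[i])%C.
Proof.
split; apply/eqP; rewrite eq_complex /=; apply/andP; split; apply/eqP. all: lra.
Qed.

Theorem lemma3p2 (R : realType) (n m q : nat)
  (P : 'rV[R[i]]_m -> 'M[R[i]]_(m, q))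
  (hP : forall y : 'rV[R[i]]_m, forall w : 'rV[R[i]]_q,
          exists v : 'rV[R[i]]_m, w = v *m P y) :
  ample_coord (R_CTr (n:=n) P).
Proof.
move=> x y L j; cbv zeta; right => v0 hv0.
set A := P y.
have g0 : good L j A v0 := hv0.
apply/seteqP; split => // w _.
set d := w - v0.
have key2 : forall t : R,
    (forall s, 0 <= s <= 1 -> good L j A (gg v0 d t s)) ->
    (forall s, 0 <= s <= 1 -> good L j A (gg v0 d (- t) s)) ->
    conv_hull (path_component
      [set v | R_CTr P x y (set_row L j v)] v0) w.
  move=> t Gt Gmt.
  exists 2%N, (fun _ => 1/2),
    (fun i : 'I_2 => if val i == 0%N then gg v0 d t 1 else gg v0 d (- t) 1).
  split.
  - move=> i; lra.
  - rewrite big_ord_recl big_ord1 /=; lra.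
  - move=> i; case: ifP => _.
      exists (gg v0 d t); split.
      + exact: gg0.
      + by [].
      + move=> s hs; exact: Gt s hs.
      + have -> : (fun s => reV (gg v0 d t s)) =
                  (fun s => reV v0 + s *: (reV d - t *: imV d)).
          by apply: funext => s; rewrite reV_gg.
        exact: cont_aff.
      + have -> : (fun s => imV (gg v0 d t s)) =
                  (fun s => imV v0 + s *: (imV d + t *: reV d)).
          by apply: funext => s; rewrite imV_gg.
        exact: cont_aff.
    exists (gg v0 d (- t)); split.
    + exact: gg0.
    + by [].
    + move=> s hs; exact: Gmt s hs.
    + have -> : (fun s => reV (gg v0 d (- t) s)) =
                (fun s => reV v0 + s *: (reV d - (- t) *: imV d)).
        by apply: funext => s; rewrite reV_gg.
      exact: cont_aff.
    + have -> : (fun s => imV (gg v0 d (- t) s)) =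
                (fun s => imV v0 + s *: (imV d + (- t) *: reV d)).
        by apply: funext => s; rewrite imV_gg.
      exact: cont_aff.
  - rewrite big_ord_recl big_ord1 /= /gg.
    have [e1 e2] := half_eqs _ t.
    have E : forall u : 'rV[R[i]]_m,
      (1/2)%:C%C *: (v0 + (1 +i* (1 * t))%C *: u) +
      (1/2)%:C%C *: (v0 + (1 +i* (1 * - t))%C *: u) = v0 + u.
      move=> u; rewrite !scalerDr !scalerA addrACA -!scalerDl.
      by rewrite e1 e2 !scale1r.
    by rewrite E /d addrC subrK.
have [n12 n1m2 nm12 nm1m2] := neqs R.
case: (pselect ((forall s, 0 <= s <= 1 -> good L j A (gg v0 d 1 s)) /\
                (forall s, 0 <= s <= 1 -> good L j A (gg v0 d (- 1) s))))
  => [[h1 h2]|hn].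
  exact: (key2 1 h1 h2).
have G2 : forall s, 0 <= s <= 1 -> good L j A (gg v0 d 2 s).
  case: (seg_ok _ _ _ _ L j A v0 d 1 2 g0 n12) => [ha|//].
  case: (seg_ok _ _ _ _ L j A v0 d (- 1) 2 g0 nm12) => [hb|//].
  by exfalso; apply: hn.
have Gm2 : forall s, 0 <= s <= 1 -> good L j A (gg v0 d (- 2) s).
  case: (seg_ok _ _ _ _ L j A v0 d 1 (- 2) g0 n1m2) => [ha|//].
  case: (seg_ok _ _ _ _ L j A v0 d (- 1) (- 2) g0 nm1m2) => [hb|//].
  by exfalso; apply: hn.
exact: (key2 2 G2 Gm2).
Qed.
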